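(* Under Algorithm 2(b) below, the decoding event occurs at a given receiver in a given slot if, in that slot, either (a) the receiver has a successful reception which results in its virtual queue being empty; or (b) the receiver has a successful reception and the receiver was a leader at the beginning of the slot.
   Context: Model: a sender broadcasts packets $\mathbf{p}_1,\mathbf{p}_2,\dots$ (vectors over $\mathbb{F}_q$, $q\ge n$, indexed by arrival order) to $n$ receivers over a slotted packet erasure broadcast channel with perfect feedback; in each slot the sender transmits at most one linear combination of queued packets and each receiver either receives it or suffers an erasure. A node's knowledge space is the space of coefficient vectors of linear combinations it can compute; the virtual queue of receiver $j$ has size $\dim$(sender's knowledge space) $-\dim$(receiver $j$'s knowledge space). A node has seen $\mathbf{p}_k$ if it can compute $\mathbf{p}_k+\mathbf{q}$ where $\mathbf{q}$ involves only packets with index greater than $k$. If receiver $r$ has seen $\mathbf{p}_k$, its witness $\mathbf{W}_r(\mathbf{p}_k)$ is the unique linear combination known to $r$ of the form $\mathbf{p}_k+\mathbf{q}$ with $\mathbf{q}$ involving only packets of index greater than $k$ not seen by $r$. A receiver's next unseen packet is its lowest-index unseen packet. Algorithm 2(b): the sender drops a packet once all receivers have seen it. Coding module: let $u_1<\dots<u_m$ be the distinct indices of next unseen packets of receivers whose next unseen packet has arrived, and $R(u_i)$ the set of those receivers whose next unseen packet is $\mathbf{p}_{u_i}$; for $j=1,\dots,m$, with $\mathbf{y}_r=\sum_{i<j}\alpha_i\mathbf{W}_r(\mathbf{p}_{u_i})$ for $r\in R(u_j)$, pick $\alpha_j\in\mathbb{F}_q$ different from the coefficient of $\mathbf{p}_{u_j}$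 in every such $\mathbf{y}_r$; transmit $\sum_i\alpha_i\mathbf{p}_{u_i}$. The decoding event at a receiver is the event that all packets the receiver has seen become decoded by it. A leader is a receiver that has seen the maximum number of packets among all receivers at the given time (there may be several). *)

(* Defs.v *)
From HB Require Import structures.
From mathcomp Require Import all_boot all_order all_algebra.
Set Implicit Arguments. Unset Strict Implicit. Unset Printing Implicit Defensive.
Import GRing.Theory.
Local Open Scope ring_scope.

Section NC.
Variables (F : finFieldType) (N : nat).
(* Packets p_1,...,p_N are indexed (0-based, in arrival order) by 'I_N;
   a coefficient vector of a linear combination of packets is a row vector. *)
Local Notation vec := 'rV[F]_N.

Definition coef (v : vec) (k : 'I_N) : F := v ord0 k.
Definition unitvec (k : 'I_N) : vec := delta_mx ord0 k.

Definition sender_space (a : nat) : {vspace vec} :=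
  <<[seq unitvec k | k <- enum 'I_N & (nat_of_ord k < a)%N]>>%VS.

Definition seen (U : {vspace vec}) (k : 'I_N) : bool :=
  [exists v : vec, [&& v \in U, coef v k == 1 &
                       [forall i : 'I_N, (i < k)%N ==> (coef v i == 0)]]].

Definition decoded (U : {vspace vec}) (k : 'I_N) : bool := unitvec k \in U.

Definition is_witness (U : {vspace vec}) (k : 'I_N) (w : vec) : Prop :=
  [/\ w \in U, coef w k = 1,
      forall i : 'I_N, (i < k)%N -> coef w i = 0 &
      forall i : 'I_N, (k < i)%N -> seen U i -> coef w i = 0].

Definition next_unseen (U : {vspace vec}) (u : 'I_N) : bool :=
  ~~ seen U u && [forall i : 'I_N, (i < u)%N ==> seen U i].

Definition num_seen (U : {vspace vec}) : nat := #|[set k | seen U k]|.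

Definition decoding_event (U : {vspace vec}) : Prop :=
  forall k : 'I_N, seen U k -> decoded U k.

Definition leader (n : nat) (V : 'I_n -> {vspace vec}) (r : 'I_n) : Prop :=
  forall r' : 'I_n, (num_seen (V r') <= num_seen (V r))%N.

Definition Ucal (n : nat) (V : 'I_n -> {vspace vec}) (a : nat) (i : 'I_N) : bool :=
  [exists r : 'I_n, next_unseen (V r) i && (i < a)%N].

(* x = sum_j alpha_j p_{u_j} is a valid output of the coding module of
   Algorithm 2(b) given receivers' knowledge spaces V and a arrived packets:
   alpha_j = coef x u_j, and alpha_j differs from the coefficient of p_{u_j}
   in y_r = sum_{i<j} alpha_i W_r(p_{u_i}) for every r in R(u_j). *)
Definition alg2b_tx (n : nat) (V : 'I_n -> {vspace vec}) (a : nat) (x : vec) : Prop :=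
  (forall k : 'I_N, coef x k != 0 -> Ucal V a k) /\
  forall (r : 'I_n) (u : 'I_N), next_unseen (V r) u -> (u < a)%N ->
    forall w : 'I_N -> vec,
      (forall i : 'I_N, Ucal V a i -> (i < u)%N -> is_witness (V r) i (w i)) ->
      coef x u != coef (\sum_(i | Ucal V a i && (i < u)%N) coef x i *: w i) u.

End NC.

(* Main.v *)
Require Import Defs.
From HB Require Import structures.
From mathcomp Require Import all_boot all_order all_algebra.
From mathcomp Require Import ring.
Set Warnings "-all".
Import GRing.Theory.
Local Open Scope ring_scope.

Lemma ord_neq (N : nat) (i k : 'I_N) : (i < k)%N -> (i == k) = false.
Proof. by move=> ik; apply/negbTE; rewrite -(inj_eq val_inj) /= ltn_eqF. Qed.
Arguments ord_neq {N i k}.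

Lemma mulmx_entry (F : finFieldType) (N : nat) (v : 'rV[F]_N) (M : 'M[F]_N) k :
  (v *m M) ord0 k = \sum_j v ord0 j * M j k.
Proof. by rewrite mxE. Qed.

Lemma low_fix (F : finFieldType) (N : nat) (s : nat) (M : 'M[F]_N)
 (hA : forall i j : 'I_N, (s <= i)%N -> M i j = 0)
 (hB : forall i j : 'I_N, (i < s)%N -> (j < s)%N -> M i j = (i == j)%:R)
 (v : 'rV[F]_N) (j : 'I_N) : (j < s)%N -> (v *m M) ord0 j = v ord0 j.
Proof.
move=> js; rewrite mulmx_entry (bigD1 j) //= hB // eqxx mulr1 big1 ?addr0 //.
move=> k kj; case: (ltnP k s) => ks.
  by rewrite hB // (negbTE kj) mulr0.
by rewrite hA // mulr0.
Qed.

Arguments low_fix {F N s M}.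

Lemma step_r (F : finFieldType) (N : nat) (U : {vspace 'rV[F]_N}) (y : 'rV[F]_N)
 (A A' s : nat) (M : 'M[F]_N) (b : bool) (P : nat -> bool)
 (hAN : (A <= N)%N) (hAA : (A <= A')%N) (hs : (s <= A)%N)
 (hA : forall i j : 'I_N, (s <= i)%N -> M i j = 0)
 (hB : forall i j : 'I_N, (i < s)%N -> (j < s)%N -> M i j = (i == j)%:R)
 (hG : forall i j : 'I_N, (A <= j)%N -> M i j = 0)
 (hC : forall i j : 'I_N, P j -> M i j = 0)
 (hD : forall i, row i M \in U)
 (hE : forall v, v \in U -> v *m M = v)
 (hyP : forall j : 'I_N, P j -> y ord0 j = 0)
 (hyA : forall j : 'I_N, (A <= j)%N -> y ord0 j = 0)
 (hc : b -> (s < A)%N -> forall sO : 'I_N, (sO : nat) = s ->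
        y ord0 sO != (y *m M) ord0 sO) :
 exists s1, exists M1 : 'M[F]_N,
  [/\ (s <= s1 <= A')%N,
      (forall i j : 'I_N, (s1 <= i)%N -> M1 i j = 0),
      (forall i j : 'I_N, (i < s1)%N -> (j < s1)%N -> M1 i j = (i == j)%:R),
      (forall i j : 'I_N, (A <= j)%N -> M1 i j = 0) &
      (forall i j : 'I_N, P j -> M1 i j = 0)] /\
   [/\ (forall i, row i M1 \in (if b then (U + <[y]>)%VS else U)),
      (forall v, v \in (if b then (U + <[y]>)%VS else U) -> v *m M1 = v) &
      (b -> ((s < A)%N -> s1 = s.+1) /\ ((A <= s)%N -> s1 = s))].
Proof.
have yMU : y *m M \in U.
  by rewrite mulmx_sum_row; apply: rpred_sum => k _; apply: rpredZ.
have sub1 : forall u, u \in U -> u \in (U + <[y]>)%VS.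
  by move=> u; apply/subvP/addvSl.
case: b hc => hc; last first.
  by exists s, M; split; split => //; rewrite leqnn (leq_trans hs hAA).
case: (ltnP s A) => sA; last first.
  have sEA : s = A by apply/eqP; rewrite eqn_leq hs sA.
  exists s, M; split; split => //.
  - by rewrite leqnn (leq_trans hs hAA).
  - by move=> i; apply: sub1.
  - have yM : y *m M = y.
      apply/rowP=> j; case: (ltnP j s) => js; first by rewrite (low_fix hA hB).
      rewrite mulmx_entry hyA -?sEA // big1 // => k _.
      by rewrite hG -?sEA // mulr0.
    move=> v /memv_addP [u uU [w /vlineP [k ->] ->]].
    by rewrite mulmxDl -scalemxAl yM hE.
have sN : (s < N)%N by apply: leq_trans sA hAN.
pose sO := Ordinal sN.
pose c := y ord0 sO - (y *m M) ord0 sO.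
have c0 : c != 0 by rewrite subr_eq0; apply: hc.
pose z := y - y *m M.
pose D : 'cV[F]_N := \col_i ((i == sO)%:R - M i sO).
pose M1 := M + c^-1 *: (D *m z).
have M1E : forall i j, M1 i j =
   M i j + c^-1 * (((i == sO)%:R - M i sO) * (y ord0 j - (y *m M) ord0 j)).
  by move=> i j; rewrite !mxE big_ord1 !mxE.
have zlow : forall j : 'I_N, (j < s)%N -> y ord0 j - (y *m M) ord0 j = 0.
  by move=> j js; rewrite (low_fix hA hB) // subrr.
have zP : forall j : 'I_N, P j -> y ord0 j - (y *m M) ord0 j = 0.
  move=> j Pj; rewrite mulmx_entry hyP // big1 ?subrr // => k _.
  by rewrite hC // mulr0.
have zA : forall j : 'I_N, (A <= j)%N -> y ord0 j - (y *m M) ord0 j = 0.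
  move=> j Aj; rewrite mulmx_entry hyA // big1 ?subrr // => k _.
  by rewrite hG // mulr0.
have MsO : forall j, M sO j = 0 by move=> j; rewrite hA.
have uDE : forall u : 'rV[F]_N, u *m D = (u ord0 sO - (u *m M) ord0 sO)%:M.
  move=> u; apply/matrixP => i j; rewrite !ord1 !mxE eqxx mulr1n.
  rewrite (eq_bigr (fun k => u ord0 k * (k == sO)%:R - u ord0 k * M k sO)); last first.
    by move=> k _; rewrite !mxE mulrBr.
  rewrite sumrB (bigD1 sO) //= eqxx mulr1 big1 ?addr0 //.
  by move=> k ksO; rewrite (negbTE ksO) mulr0.
exists s.+1, M1; split; split.
- by rewrite leqnSn (leq_trans sA hAA).
- move=> i j si; rewrite M1E !hA ?(ltnW si) //.
  have -> : (i == sO) = false.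
    by apply/negbTE; rewrite -(inj_eq val_inj) /= gtn_eqF.
  by rewrite subrr mul0r mulr0 addr0.
- move=> i j si sj; rewrite M1E.
  case: (ltnP j s) => js.
    rewrite zlow // mulr0 mulr0 addr0.
    case: (ltnP i s) => is_; first by rewrite hB.
    have iE : (i : nat) = s by apply/eqP; rewrite eqn_leq is_ -ltnS si.
    rewrite hA ?iE //.
    by have -> : (i == j) = false by apply/negbTE; rewrite -(inj_eq val_inj) /= iE gtn_eqF.
  have jE : j = sO by apply: val_inj => /=; apply/eqP; rewrite eqn_leq js -ltnS sj.
  rewrite jE -/c; field; exact: c0.
- by move=> i j Aj; rewrite M1E zA // hG // mulr0 mulr0 addr0.
- by move=> i j Pj; rewrite M1E zP // hC // mulr0 mulr0 addr0.
- move=> i.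
  have -> : row i M1 = row i M + (c^-1 * ((i == sO)%:R - M i sO)) *: z.
    by apply/rowP => j; rewrite !mxE big_ord1 !mxE mulrA.
  apply: rpredD; first exact: sub1.
  apply: rpredZ; rewrite /z addrC; apply: memv_add; first by rewrite rpredN.
  exact: memv_line.
- have UM1 : forall u, u \in U -> u *m M1 = u.
    move=> u uU; rewrite mulmxDr -scalemxAr mulmxA uDE hE // subrr.
    by rewrite mul_scalar_mx scale0r scaler0 addr0.
  have yM1 : y *m M1 = y.
    rewrite mulmxDr -scalemxAr mulmxA uDE -/c mul_scalar_mx scalerA mulVf //.
    by rewrite scale1r /z addrC subrK.
  move=> v /memv_addP [u uU [w /vlineP [k ->] ->]].
  by rewrite mulmxDl -scalemxAl yM1 UM1.
- by move=> _; split=> // /(leq_trans sA); rewrite ltnn.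
Qed.
Lemma seen_char (F : finFieldType) (N : nat) (U : {vspace 'rV[F]_N}) (s : nat) (M : 'M[F]_N)
 (hA : forall i j : 'I_N, (s <= i)%N -> M i j = 0)
 (hB : forall i j : 'I_N, (i < s)%N -> (j < s)%N -> M i j = (i == j)%:R)
 (hD : forall i, row i M \in U)
 (hE : forall v, v \in U -> v *m M = v) :
 forall k : 'I_N, seen U k = (k < s)%N.
Proof.
move=> k; apply/idP/idP.
- case/existsP=> v /and3P [vU /eqP vk /forallP vlt].
  rewrite ltnNge; apply/negP=> sk.
  have := congr1 (fun w : 'rV[F]_N => w ord0 k) (hE _ vU).
  rewrite /= mulmx_entry big1.
    by move: vk; rewrite /coef => -> /eqP; rewrite eq_sym oner_eq0.
  move=> i _; case: (ltnP i k) => ik.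
    by have /implyP/(_ ik)/eqP := vlt i; rewrite /coef => ->; rewrite mul0r.
  by rewrite hA ?mulr0 // (leq_trans sk ik).
- move=> ks; apply/existsP; exists (row k M).
  rewrite hD /=; have -> : coef (row k M) k = 1 by rewrite /coef mxE hB // eqxx.
  rewrite eqxx /=.

  apply/forallP; move=> i.

 apply/implyP; move=> ik.
  rewrite /coef mxE hB //; last exact: ltn_trans ik ks.
  by rewrite (eq_sym k) (ord_neq ik).
Qed.

Arguments seen_char {F N U s M}.

Lemma witness_row (F : finFieldType) (N : nat) (U : {vspace 'rV[F]_N}) (s : nat) (M : 'M[F]_N)
 (hA : forall i j : 'I_N, (s <= i)%N -> M i j = 0)
 (hB : forall i j : 'I_N, (i < s)%N -> (j < s)%N -> M i j = (i == j)%:R)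
 (hD : forall i, row i M \in U)
 (hE : forall v, v \in U -> v *m M = v) :
 forall i : 'I_N, (i < s)%N -> is_witness U i (row i M).
Proof.
move=> i is_; split => //.
- by rewrite /coef mxE hB // eqxx.
- by move=> j ji; rewrite /coef mxE hB ?(ltn_trans ji) // eq_sym ord_neq.
- move=> j ij; rewrite (seen_char hA hB hD hE) => js.
  by rewrite /coef mxE hB // ord_neq.
Qed.

Arguments witness_row {F N U s M}.

Lemma next_unseen_char (F : finFieldType) (N : nat) (U : {vspace 'rV[F]_N}) (s : nat) (M : 'M[F]_N)
 (hA : forall i j : 'I_N, (s <= i)%N -> M i j = 0)
 (hB : forall i j : 'I_N, (i < s)%N -> (j < s)%N -> M i j = (i == j)%:R)
 (hD : forall i, row i M \in U)
 (hE : forall v, v \in U -> v *m M = v) (u : 'I_N) :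
 next_unseen U u = ((u : nat) == s).
Proof.
rewrite /next_unseen (seen_char hA hB hD hE) -leqNgt.
apply/andP/eqP.
- case=> su /forallP al; apply/eqP; rewrite eqn_leq su andbT.
  rewrite leqNgt; apply/negP => us.
  have sN : (s < N)%N by apply: ltn_trans us (ltn_ord u).
  have := al (Ordinal sN); rewrite (seen_char hA hB hD hE) /= ltnn us.
  by [].
- move=> ->; rewrite leqnn; split => //; apply/forallP=> i.
  by apply/implyP; rewrite (seen_char hA hB hD hE).
Qed.

Arguments next_unseen_char {F N U s M}.

Definition Inv (F : finFieldType) (N n : nat) (V : 'I_n -> {vspace 'rV[F]_N}) (A : nat)
  (s : 'I_n -> nat) (M : 'I_n -> 'M[F]_N) : Prop :=
 forall r, [/\ (s r <= A)%N,
   (forall i j : 'I_N, (s r <= i)%N -> M r i j = 0),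
   (forall i j : 'I_N, (i < s r)%N -> (j < s r)%N -> M r i j = (i == j)%:R),
   (forall i j : 'I_N, (A <= j)%N -> M r i j = 0) &
   (forall i j : 'I_N, (forall r', (s r' < j)%N) -> M r i j = 0)] /\
  [/\ (forall i, row i (M r) \in V r) & (forall v, v \in V r -> v *m M r = v)].

Arguments Inv {F N n}.

Lemma inv_step (F : finFieldType) (N n : nat) (V V1 : 'I_n -> {vspace 'rV[F]_N})
  (A A1 : nat) (y : 'rV[F]_N) (rc : 'I_n -> bool) (s : 'I_n -> nat) (M : 'I_n -> 'M[F]_N) :
  (A <= A1)%N -> (A <= N)%N ->
  (forall r, V1 r = if rc r then (V r + <[y]>)%VS else V r) ->
  alg2b_tx V A y ->
  Inv V A s M ->
  exists s1, exists M1, [/\ Inv V1 A1 s1 M1,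
     (forall r, (s r <= s1 r)%N),
     (forall r i (j : 'I_N), (forall r', (s r' < j)%N) -> M1 r i j = 0),
     (forall r i (j : 'I_N), (A <= j)%N -> M1 r i j = 0) &
     (forall r, rc r -> ((s r < A)%N -> s1 r = (s r).+1) /\ ((A <= s r)%N -> s1 r = s r))].
Proof.
move=> hAA hAN hV1 [hx1 hx2] hI.
pose P := fun j : nat => [forall r', (s r' < j)%N].
have yU : forall k : 'I_N, y ord0 k != 0 -> Ucal V A k by move=> k; apply: hx1.
have hyU : forall k : 'I_N, ~~ Ucal V A k -> y ord0 k = 0.
  by move=> k; apply: contraNeq; apply: yU.
have hstep : forall r, exists s1, exists M1 : 'M[F]_N,
  [/\ (s r <= s1 <= A1)%N,
      (forall i j : 'I_N, (s1 <= i)%N -> M1 i j = 0),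
      (forall i j : 'I_N, (i < s1)%N -> (j < s1)%N -> M1 i j = (i == j)%:R),
      (forall i j : 'I_N, (A <= j)%N -> M1 i j = 0) &
      (forall i j : 'I_N, P j -> M1 i j = 0)] /\
   [/\ (forall i, row i M1 \in (if rc r then (V r + <[y]>)%VS else V r)),
      (forall v, v \in (if rc r then (V r + <[y]>)%VS else V r) -> v *m M1 = v) &
      (rc r -> ((s r < A)%N -> s1 = (s r).+1) /\ ((A <= s r)%N -> s1 = s r))].
  move=> r; have [[hs hA hB hG hC] [hD hE]] := hI r.
  apply: (@step_r _ _ (V r) y _ _ _ _ (rc r) P hAN hAA hs hA hB hG _ hD hE).
  - by move=> i j; rewrite /P => /forallP; apply: hC.
  - move=> j; rewrite /P => /forallP Pj; apply: hyU; apply/negP => /existsP [r' /andP [nu _]].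
    have [[_ hA' hB' _ _] [hD' hE']] := hI r'.
    move: nu; rewrite (next_unseen_char hA' hB' hD' hE') => /eqP je.
    by have := Pj r'; rewrite je ltnn.
  - move=> j Aj; apply: hyU; apply/negP => /existsP [r' /andP [_ jA]].
    by move: jA; rewrite ltnNge Aj.
  - move=> rr sA sO sOE.
    have nu : next_unseen (V r) sO by rewrite (next_unseen_char hA hB hD hE) sOE.
    have sOA : (sO < A)%N by rewrite sOE.
    have := hx2 r sO nu sOA (fun i => row i (M r)).
    have wit : forall i : 'I_N, Ucal V A i -> (i < sO)%N -> is_witness (V r) i (row i (M r)).
      by move=> i _ isO; apply: (witness_row hA hB hD hE); rewrite -sOE.
    move=> /(_ wit).
    suff -> : (\sum_(i | Ucal V A i && (i < sO)%N) coef y i *: row i (M r)) = y *m M r by [].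
    rewrite mulmx_sum_row big_mkcond /=; apply: eq_bigr => i _.
    case: ifP => [/andP [_ _] // | /negbT].
    rewrite negb_and => /orP [/hyU -> | ]; first by rewrite scale0r.
    rewrite -leqNgt sOE => si.
    have -> : row i (M r) = 0 by apply/rowP => j; rewrite !mxE hA.
    by rewrite scaler0.
have [s1 hs1] := fin_all_exists hstep.
have [M1 hM1] := fin_all_exists hs1.
exists s1, M1; split.
- move=> r; have [[/andP [_ h1] h2 h3 h4 h5] [h6 h7 _]] := hM1 r.
  split; split; rewrite ?hV1 //.
  + by move=> i j Aj; apply: h4; apply: leq_trans Aj.
  + move=> i j hj; apply: h5; apply/forallP => r'.
    have [[/andP [h' _] _ _ _ _] _] := hM1 r'.
    by apply: leq_ltn_trans h' (hj r').
- by move=> r; have [[/andP [h _] _ _ _ _] _] := hM1 r.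
- move=> r i j hj; have [[_ _ _ _ h5] _] := hM1 r.
  by apply: h5; apply/forallP.
- by move=> r i j Aj; have [[_ _ _ h4 _] _] := hM1 r; apply: h4.
- by move=> r; have [_ [_ _ h8]] := hM1 r.
Qed.

Arguments inv_step {F N n V V1 A A1 y rc s M}.

Theorem theorem10 (F : finFieldType) (n N : nat)
  (a : nat -> nat) (x : nat -> 'rV[F]_N) (rcv : nat -> 'I_n -> bool)
  (V : 'I_n -> nat -> {vspace 'rV[F]_N}) :
  (n <= #|F|)%N ->
  (forall t, a t <= a t.+1)%N ->
  (forall t, a t <= N)%N ->
  (forall r, V r 0%N = 0%VS) ->
  (forall r t, V r t.+1 = if rcv t r then (V r t + <[x t]>)%VS else V r t) ->
  (forall t, alg2b_tx (fun r => V r t) (a t) (x t)) ->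
  forall (t : nat) (r : 'I_n),
    rcv t r ->
    (\dim (V r t.+1) = \dim (@sender_space F N (a t)) \/ leader (fun r' => V r' t) r) ->
    decoding_event (V r t.+1).
Proof.
move=> _ ha haN hV0 hVS halg.
have inv_all : forall t, exists s, exists M, Inv (fun r => V r t) (a t) s M.
  elim=> [|t [s [M hI]]].
    exists (fun _ => 0%N), (fun _ => 0); move=> r; split; split => //=.
    - by move=> i j _; rewrite mxE.
    - by move=> i j _; rewrite mxE.
    - by move=> i j _; rewrite mxE.
    - by move=> i; rewrite row0 mem0v.
    - by move=> v; rewrite hV0 memv0 => /eqP ->; rewrite mul0mx.
  have [s1 [M1 [hI1 _ _ _ _]]] := inv_step (ha t) (haN t) (fun r => hVS r t) (halg t) hI.
  by exists s1, M1.
move=> t r hr hcase.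
have [s [M hI]] := inv_all t.
have [s1 [M1 [hI1 hss hC1 hG1 hrc]]] :=
  inv_step (ha t) (haN t) (fun r => hVS r t) (halg t) hI.
have [[hs1 hA1 hB1 _ _] [hD1 hE1]] := hI1 r.
have supp : forall v, v \in V r t.+1 -> forall j : 'I_N, (a t <= j)%N -> v ord0 j = 0.
  move=> v vV j ja; rewrite -(hE1 v vV) mulmx_entry big1 // => k _.
  by rewrite hG1 // mulr0.
case: hcase => [hdim | hlead].
- pose E := @sender_space F N (a t).
  have inE : forall k : 'I_N, (k < a t)%N -> unitvec F k \in E.
    move=> k ka; apply: memv_span; apply/mapP; exists k => //.
    by rewrite mem_filter ka mem_enum.
  have sub : (V r t.+1 <= E)%VS.
    apply/subvP => v vV; rewrite (row_sum_delta v); apply: rpred_sum => j _.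
    case: (ltnP j (a t)) => ja.
      by apply: rpredZ; apply: inE.
    by rewrite supp // scale0r mem0v.
  have VE : V r t.+1 = E by apply/eqP; rewrite eqEdim sub hdim leqnn.
  move=> k /existsP [v /and3P [vV /eqP vk _]].
  have ka : (k < a t)%N.
    rewrite ltnNge; apply/negP => ak.
    by move: vk; rewrite /coef supp // => /eqP; rewrite eq_sym oner_eq0.
  by rewrite /decoded VE inE.
- have hle : forall r', (s r' <= s r)%N.
    move=> r'; rewrite leqNgt; apply/negP => lt.
    have := hlead r'; apply/negP; rewrite -ltnNge.
    have [[hs hA hB _ _] [hD hE]] := hI r.
    have [[hs' hA' hB' _ _] [hD' hE']] := hI r'.
    rewrite /num_seen.
    have -> : [set k | seen (V r t) k] = [set k : 'I_N | (k < s r)%N].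
      by apply/setP => k; rewrite !inE (seen_char hA hB hD hE).
    have -> : [set k | seen (V r' t) k] = [set k : 'I_N | (k < s r')%N].
      by apply/setP => k; rewrite !inE (seen_char hA' hB' hD' hE').
    apply: proper_card; rewrite properE; apply/andP; split.
      by apply/subsetP => k; rewrite !inE => h; apply: ltn_trans h lt.
    have sN : (s r < N)%N by apply: leq_trans lt (leq_trans hs' (haN t)).
    apply/subsetPn; exists (Ordinal sN); by rewrite !inE /= ?ltnn ?lt.
  move=> k; rewrite (seen_char hA1 hB1 hD1 hE1) => ks.
  rewrite /decoded.
  have -> : unitvec F k = row k (M1 r).
    apply/rowP => j; rewrite !mxE eqxx /=.
    case: (ltnP j (s1 r)) => js; first by rewrite hB1 // eq_sym.
    have -> : (j == k) = false.
      by apply/negbTE; rewrite -(inj_eq val_inj) /= gtn_eqF // (leq_trans ks js).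
    have [h1 h2] := hrc r hr.
    case: (ltnP (s r) (a t)) => sa.
      rewrite hC1 // => r'; apply: leq_ltn_trans (hle r') _.
      by rewrite -ltnS -(h1 sa).
    by rewrite hG1 // (leq_trans sa) // -(h2 sa).
  exact: hD1.
Qed.
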